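(* Let $r\ge1$, let $A$ be a forest of $r$ rooted trees without free edges, let $\overline a$ carry $r$ free edges, and let $a$ be without free edges, where $a$ and $\overline a$ are both aromas or both aromatic trees. Let $\mathcal G(a,A,\overline a)$ be the set of graftings of $A$ on $\overline a$ whose result is isomorphic to $a$, and $\mathcal C(a,A,\overline a)$ the set of admissible cuts $c$ of $a$ such that $P^c(a)\cong A$ and $\overline R^c(a)\cong\overline a$. Then \[|\mathcal C(a,A,\overline a)|=\frac{\sigma(a)}{\sigma(A)\,\sigma(\overline a)}\,|\mathcal G(a,A,\overline a)|.\]
   Context: Fix a finite set $C$ of decorations. A (rooted) tree is a finite connected directed graph with $C$-decorated vertices in which each vertex has exactly one outgoing edge except the root, which has none (edges point towards the root). An aroma is a finite connected directed graph in which every vertex has exactly one outgoing edge; it contains a unique cycle. An aromatic tree is a disjoint union of one tree and finitely many aromas. An object with free edges additionally carries at each vertex $v$ a number $r_v\ge0$ of free edges. $\sigma(\cdot)$ denotes the number of automorphisms preserving decorations (and free-edge numbers). A grafting of $A$ on $\overline a$ is a map $g$ from the set of the $r$ connected components of $A$ (considered as distinct) to the vertex set of $\overline a$ such that $|g^{-1}(v)|=r_v$ for every vertex $v$; its result is obtained by adding, for each component, an edge from its root to $g(\text{component})$ and removing all free edges. An admissible cut $c$ of $a$ is a set of edges of $a$, none lying on a cycle, such that every directed path contains at most one edge of $c$. Removing the edges of $c$, $P^c(a)$ is the forest of components containing neither the root nor a cycle (each rooted at the source of its cut edge), and $R^c(a)$ is the remaining part (containing the root and all cycles); $\overline R^c(a)$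 is $R^c(a)$ with, for each cut edge $u\to w$, a free edge added at $w$. *)

(* Defs.v *)
From HB Require Import structures.
From mathcomp Require Import all_boot all_order all_algebra.
Set Implicit Arguments. Unset Strict Implicit. Unset Printing Implicit Defensive.

(* A finite directed graph in which every vertex has at most one outgoing
   edge, given by [par v] (= Some w for an edge v -> w, None if v has no
   outgoing edge; Some v is a loop), with C-decorations [dec] and numbers of
   free edges [nfree]. Trees, aromas, forests, aromatic trees (with or without
   free edges) are all such graphs. *)
Record graph (C : finType) := Graph {
  vtx : finType;
  par : vtx -> option vtx;
  dec : vtx -> C;
  nfree : vtx -> nat }.

Section Graphs.
Variable C : finType.
Implicit Types G H : graph C.

Definition pstep G (x : option (vtx G)) : option (vtx G) := obind (@par C G) x.

Definition reach G (x y : vtx G) : bool :=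
  [exists k : 'I_(#|vtx G|).+1, iter k (@pstep G) (Some x) == Some y].

Definition on_cycle G (x : vtx G) : bool :=
  [exists k : 'I_(#|vtx G|), iter k.+1 (@pstep G) (Some x) == Some x].

Definition is_root G (x : vtx G) : bool := par x == None.

Definition adj G : rel (vtx G) :=
  fun u w => (par u == Some w) || (par w == Some u).
Definition connected G : bool :=
  [forall u : vtx G, [forall w : vtx G, connect (@adj G) u w]].

Definition no_free G : bool := [forall v : vtx G, nfree v == 0].
Definition total_free G : nat := \sum_(v : vtx G) nfree v.

Definition is_tree G : bool := connected G && (#|[set v : vtx G | is_root v]| == 1).

Definition is_aroma G : bool :=
  (0 < #|vtx G|) && connected G && [forall v : vtx G, ~~ is_root v].

(* an aromatic tree: disjoint union of one tree and finitely many aromas.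
   In a graph with out-degrees <= 1, each connected component is either a
   tree (exactly one root) or an aroma (no root), so this means: exactly one
   vertex without outgoing edge. *)
Definition is_aromatic_tree G : bool := #|[set v : vtx G | is_root v]| == 1.

(* a forest of r rooted trees: no cycles, every component is a tree, and
   there are r components (= r roots) *)
Definition is_forest (r : nat) G : bool :=
  [forall v : vtx G, ~~ on_cycle v] && (#|[set v : vtx G | is_root v]| == r).

Definition iso_map G H (f : vtx G -> vtx H) : bool :=
  [&& injectiveb f, #|vtx G| == #|vtx H| &
   [forall v : vtx G, [&& par (f v) == omap f (par v),
                  dec (f v) == dec v & nfree (f v) == nfree v]]].

Definition iso G H : bool := [exists f : {ffun vtx G -> vtx H}, iso_map f].

Definition sigma G : nat := #|[set f : {ffun vtx G -> vtx G} | iso_map f]|.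

(* the connected components of a forest A, identified with their roots *)
Definition comps G : finType := {x : vtx G | is_root x}.

Section Graft.
Variables (A abar : graph C) (g : comps A -> vtx abar).

Definition graft_par (x : (vtx A + vtx abar)%type) : option (vtx A + vtx abar) :=
  match x with
  | inl x => match par x with
             | Some y => Some (inl y)
             | None => omap (fun c => inr (g c)) (insub x : option (comps A))
             end
  | inr y => omap inr (par y)
  end.

Definition graft_dec (x : (vtx A + vtx abar)%type) : C :=
  match x with inl x => dec x | inr y => dec y end.

Definition graft : graph C :=
  @Graph C (vtx A + vtx abar)%type graft_par graft_dec (fun _ => 0).
End Graft.

Definition is_grafting (A abar : graph C) (g : {ffun comps A -> vtx abar}) : bool :=
  [forall v : vtx abar, #|[set c | g c == v]| == nfree v].

Definition graftings (a A abar : graph C) : {set {ffun comps A -> vtx abar}} :=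
  [set g | is_grafting g && iso (graft g) a].

(* a cut is given by the set of sources of its edges (each vertex has at most
   one outgoing edge, so an edge is determined by its source) *)
Definition admissible G (c : {set vtx G}) : bool :=
  [forall u in c, ~~ is_root u && ~~ on_cycle u] &&
  [forall u1 in c, [forall u2 in c,
     (u1 != u2) ==> ~~ [exists w : vtx G, (par u1 == Some w) && reach w u2]]].

Section Cut.
Variables (a : graph C) (c : {set vtx a}).

(* vertices of P^c(a): those whose directed path meets a cut edge, i.e. those
   whose component after removing c contains neither root nor cycle *)
Definition inP (v : vtx a) : bool := [exists u in c, reach v u].

Definition Pvtx : finType := {v : vtx a | inP v}.
Definition Rvtx : finType := {v : vtx a | ~~ inP v}.

Definition Ppar (v : Pvtx) : option Pvtx :=
  if val v \in c then None else obind insub (par (val v)).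
Definition Rpar (v : Rvtx) : option Rvtx := obind insub (par (val v)).

Definition Pc : graph C :=
  @Graph C Pvtx Ppar (fun v => dec (val v)) (fun v => nfree (val v)).

Definition Rbarc : graph C :=
  @Graph C Rvtx Rpar (fun v => dec (val v))
    (fun v => nfree (val v) + #|[set u in c | par u == Some (val v)]|).
End Cut.

Definition cuts (a A abar : graph C) : {set {set vtx a}} :=
  [set c | [&& admissible c, iso (Pc c) A & iso (Rbarc c) abar]].

End Graphs.

(* Main.v *)
Require Import Defs.
From HB Require Import structures.
From mathcomp Require Import all_boot all_order all_algebra.
From mathcomp Require Import zify ring lra.
Set Implicit Arguments. Unset Strict Implicit. Unset Printing Implicit Defensive.

Section Gen.
Variable C : finType.
Implicit Types G H : graph C.

Lemma iter_none G k : iter k (@pstep C G) None = None.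
Proof. by elim: k => //= k ->. Qed.

Lemma iter_some_le G k j x y : j <= k ->
  iter k (@pstep C G) (Some x) = Some y -> exists z, iter j (@pstep C G) (Some x) = Some z.
Proof.
move=> le; rewrite -(subnK le) iterD.
case: (iter j _ _) => [z|]; first by exists z.
by rewrite iter_none.
Qed.

Lemma shorten G k x y : iter k (@pstep C G) (Some x) = Some y ->
  exists2 k', k' < #|vtx G| & iter k' (@pstep C G) (Some x) = Some y.
Proof.
elim: k {-2}k (leqnn k) => [|n IH] k le.
  by move: le; rewrite leqn0 => /eqP -> /= ->; exists 0 => //; apply/card_gt0P; exists y.
case: (ltnP k #|vtx G|) => [lt e|ge e]; first by exists k.
pose F (i : 'I_k.+1) := odflt x (iter i (@pstep C G) (Some x)).
have : ~~ injectiveb F.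
  apply/injectiveP => inj; have := leq_card F inj; rewrite card_ord => h.
  by move: (leq_trans h ge); rewrite ltnn.
move/injectivePn => [i [j neq eqF]].
have hi : i <= k by rewrite -ltnS.
have hj : j <= k by rewrite -ltnS.
have [zi ei] := iter_some_le hi e.
have [zj ej] := iter_some_le hj e.
move: eqF; rewrite /F ei ej /= => ez; subst zj.
wlog lt : i j hi hj ei ej neq / i < j.
  move=> W; case: (ltngtP i j) => h; first exact: (W i j).
    by apply: (W j i) => //; rewrite eq_sym.
  by move: neq; rewrite -val_eqE /= h eqxx.
apply: (IH (k - j + i)).
  have : (k - j + i < k)%N by move: lt hj; clear; lia.
  by move: le; clear; lia.
by rewrite iterD ei -ej -iterD subnK.
Qed.

Definition ureach G (x y : vtx G) := exists k, iter k (@pstep C G) (Some x) = Some y.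

Lemma reachP G (x y : vtx G) : reflect (ureach x y) (reach x y).
Proof.
apply: (iffP existsP) => [[k /eqP e]|[k e]]; first by exists k.
have [k' lt e'] := shorten e.
by exists (@Ordinal _ k' (leqW lt)); apply/eqP.
Qed.

Lemma on_cycleP G (x : vtx G) :
  reflect (exists k, iter k.+1 (@pstep C G) (Some x) = Some x) (on_cycle x).
Proof.
apply: (iffP existsP) => [[k /eqP e]|[k e]]; first by exists k.
move: e; rewrite iterSr /=; case ex: (par x) => [y|]; last by rewrite iter_none.
move=> e; have [k' lt e'] := shorten e.
exists (Ordinal lt); apply/eqP; rewrite /=. by rewrite -iterS iterSr /= ex.
Qed.

Lemma ureach_refl G (x : vtx G) : ureach x x.
Proof. by exists 0. Qed.

Lemma ureach_trans G (x y z : vtx G) : ureach x y -> ureach y z -> ureach x z.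
Proof. by move=> [k1 e1] [k2 e2]; exists (k2 + k1); rewrite iterD e1. Qed.

Lemma ureach_step G (x y : vtx G) : par x = Some y -> ureach x y.
Proof. by move=> e; exists 1; rewrite /= e. Qed.

Lemma ureach_first G (x y : vtx G) : ureach x y -> x != y ->
  exists2 w, par x = Some w & ureach w y.
Proof.
move=> [[|k] e] neq; first by move: e neq => /= [->]; rewrite eqxx.
move: e; rewrite iterSr /=; case: (par x) => [w|]; last by rewrite iter_none.
by move=> e; exists w => //; exists k.
Qed.

Section Iso.
Variables (G H : graph C) (f : vtx G -> vtx H).
Hypothesis isof : iso_map f.

Lemma iso_inj : injective f.
Proof. by case/and3P: isof => /injectiveP. Qed.
Lemma iso_card : #|vtx G| = #|vtx H|.
Proof. by case/and3P: isof => _ /eqP. Qed.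
Lemma iso_par v : par (f v) = omap f (par v).
Proof. by case/and3P: isof => _ _ /forallP /(_ v) /and3P [/eqP]. Qed.
Lemma iso_dec v : dec (f v) = dec v.
Proof. by case/and3P: isof => _ _ /forallP /(_ v) /and3P [_ /eqP]. Qed.
Lemma iso_nfree v : nfree (f v) = nfree v.
Proof. by case/and3P: isof => _ _ /forallP /(_ v) /and3P [_ _ /eqP]. Qed.
Lemma iso_bij : bijective f.
Proof. by apply: inj_card_bij iso_inj _; rewrite iso_card. Qed.

Lemma iso_iter k (x : option (vtx G)) :
  iter k (@pstep C H) (omap f x) = omap f (iter k (@pstep C G) x).
Proof.
elim: k => //= k ->; case: (iter k _ x) => //= v.
by rewrite iso_par.
Qed.

Lemma iso_ureach x y : ureach (f x) (f y) <-> ureach x y.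
Proof.
split=> [[k e]|[k e]]; exists k.
  move: e; rewrite (iso_iter k (Some x)); case: (iter k _ _) => //= v [].
  by move/iso_inj => ->.
by rewrite (iso_iter k (Some x)) e.
Qed.

Lemma iso_reach x y : reach (f x) (f y) = reach x y.
Proof. by apply/reachP/reachP => /iso_ureach. Qed.

Lemma iso_on_cycle x : on_cycle (f x) = on_cycle x.
Proof.
apply/on_cycleP/on_cycleP => [[k e]|[k e]]; exists k.
  move: e; rewrite (iso_iter k.+1 (Some x)); case: (iter k.+1 _ _) => //= v [].
  by move/iso_inj => ->.
by rewrite (iso_iter k.+1 (Some x)) e.
Qed.

Lemma iso_inv : exists f' : {ffun vtx H -> vtx G},
  [/\ iso_map f', cancel f f' & cancel f' f].
Proof.
have [g fg gf] := iso_bij.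
exists [ffun y => g y]; split; last 2 first.
- by move=> x; rewrite ffunE.
- by move=> x; rewrite ffunE.
apply/and3P; split.
- by apply/injectiveP => y1 y2; rewrite !ffunE => /(congr1 f); rewrite !gf.
- by rewrite iso_card.
apply/forallP => y; rewrite !ffunE; have := iso_par (g y); have := iso_dec (g y); have := iso_nfree (g y); rewrite gf => -> -> e.
rewrite !eqxx !andbT; move: e; case: (par (g y)) => [v|] /= -> /=; last by [].
by rewrite ffunE fg.
Qed.
End Iso.

Lemma iso_comp G H K (f : vtx G -> vtx H) (h : vtx H -> vtx K) :
  iso_map f -> iso_map h -> iso_map (fun x => h (f x)).
Proof.
move=> If Ih; apply/and3P; split.
- apply/injectiveP => x y /(iso_inj Ih) /(iso_inj If) //.
- by rewrite (iso_card If) (iso_card Ih).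
apply/forallP => v; rewrite (iso_par Ih) (iso_par If) (iso_dec Ih) (iso_dec If).
rewrite (iso_nfree Ih) (iso_nfree If) !eqxx !andbT.
by case: (par v).
Qed.


Lemma iso_map_ext G H (f1 f2 : vtx G -> vtx H) : f1 =1 f2 -> iso_map f1 = iso_map f2.
Proof.
move=> e; rewrite /iso_map (eq_injectiveb e); congr [&& _, _ & _].
apply: eq_forallb => v; rewrite e; congr [&& _ == _, _ & _].
by case: (par v) => //= w; rewrite e.
Qed.

Lemma iso_idm G : iso_map (fun x : vtx G => x).
Proof.
apply/and3P; split=> //; first by apply/injectiveP.
by apply/forallP => v; rewrite !eqxx !andbT; case: (par v).
Qed.

Lemma sigma_gt0 G : 0 < sigma G.
Proof.
apply/card_gt0P; exists [ffun x => x]; rewrite inE.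
by rewrite (iso_map_ext (f2 := fun x => x)) ?iso_idm // => x; rewrite ffunE.
Qed.

Lemma card_iso_r G H (h0 : vtx G -> vtx H) : iso_map h0 ->
  #|[set h : {ffun vtx G -> vtx H} | iso_map h]| = sigma H.
Proof.
move=> I0; have [h0' [I0' c1 c2]] := iso_inv I0.
rewrite /sigma.
have -> : [set h : {ffun vtx G -> vtx H} | iso_map h] =
   [set [ffun x => psi (h0 x)] | psi : {ffun vtx H -> vtx H} in [set f : {ffun vtx H -> vtx H} | iso_map f]].
  apply/setP => h; rewrite inE; apply/idP/imsetP.
    move=> Ih; exists [ffun y => h (h0' y)].
      rewrite inE (iso_map_ext (f2 := fun y => h (h0' y))); last by move=> y; rewrite ffunE.
      exact: iso_comp.
    by apply/ffunP => x; rewrite !ffunE c1.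
  move=> [psi]; rewrite inE => Ipsi ->.
  rewrite (iso_map_ext (f2 := fun x => psi (h0 x))); last by move=> y; rewrite ffunE.
  exact: iso_comp.
apply: card_in_imset => p1 p2 _ _ e; apply/ffunP => y.
by move/ffunP: e => /(_ (h0' y)); rewrite !ffunE c2.
Qed.

Lemma card_iso_l G H (h0 : vtx G -> vtx H) : iso_map h0 ->
  #|[set h : {ffun vtx G -> vtx H} | iso_map h]| = sigma G.
Proof.
move=> I0; have [h0' [I0' c1 c2]] := iso_inv I0.
rewrite /sigma.
have -> : [set h : {ffun vtx G -> vtx H} | iso_map h] =
   [set [ffun x => h0 (psi x)] | psi : {ffun vtx G -> vtx G} in [set f : {ffun vtx G -> vtx G} | iso_map f]].
  apply/setP => h; rewrite inE; apply/idP/imsetP.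
    move=> Ih; exists [ffun y => h0' (h y)].
      rewrite inE (iso_map_ext (f2 := fun y => h0' (h y))); last by move=> y; rewrite ffunE.
      exact: iso_comp.
    by apply/ffunP => x; rewrite !ffunE c2.
  move=> [psi]; rewrite inE => Ipsi ->.
  rewrite (iso_map_ext (f2 := fun x => h0 (psi x))); last by move=> y; rewrite ffunE.
  exact: iso_comp.
apply: card_in_imset => p1 p2 _ _ e; apply/ffunP => y.
by move/ffunP: e => /(_ y); rewrite !ffunE => /(iso_inj I0).
Qed.

Lemma iso_sym G H : iso G H -> iso H G.
Proof.
case/existsP => f If; have [f' [If' _ _]] := iso_inv If.
by apply/existsP; exists f'.
Qed.

Lemma isoP G H : reflect (exists f : vtx G -> vtx H, iso_map f) (iso G H).
Proof.
apply: (iffP existsP) => [[f If]|[f If]]; first by exists f.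
exists [ffun x => f x].
by rewrite (iso_map_ext (f2 := f)) // => x; rewrite ffunE.
Qed.

End Gen.

Section Forest.
Variable C : finType.

Lemma pigeon (G : graph C) k x y : #|vtx G| <= k ->
  iter k (@pstep C G) (Some x) = Some y ->
  exists i j z, [/\ i < j, j <= k, iter i (@pstep C G) (Some x) = Some z &
                 iter j (@pstep C G) (Some x) = Some z].
Proof.
move=> ge e.
pose F (i : 'I_k.+1) := odflt x (iter i (@pstep C G) (Some x)).
have : ~~ injectiveb F.
  apply/injectiveP => inj; have := leq_card F inj; rewrite card_ord => h.
  by move: (leq_trans h ge); rewrite ltnn.
move/injectivePn => [i [j neq eqF]].
have hi : i <= k by rewrite -ltnS.
have hj : j <= k by rewrite -ltnS.
have [zi ei] := iter_some_le hi e.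
have [zj ej] := iter_some_le hj e.
move: eqF; rewrite /F ei ej /= => ez; subst zj.
case: (ltngtP i j) => h.
- by exists i, j, zi.
- by exists j, i, zi.
- by move: neq; rewrite -val_eqE /= h eqxx.
Qed.

Lemma forest_root (G : graph C) : [forall v : vtx G, ~~ on_cycle v] ->
  forall x : vtx G, exists2 rho, is_root rho & ureach x rho.
Proof.
move=> /forallP nc x.
have hn : iter #|vtx G| (@pstep C G) (Some x) = None.
  case e: (iter _ _ _) => [y|] //.
  have [i [j [z [lt hj ei ej]]]] := pigeon (leqnn _) e.
  have : on_cycle z.
    apply/on_cycleP; exists (j - i).-1; rewrite prednK ?subn_gt0 //.
    by rewrite -{1}ei -iterD subnK ?(ltnW lt).
  by move=> h; move: (nc z); rewrite h.
suff : forall m, iter m (@pstep C G) (Some x) = None ->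
  exists2 rho : vtx G, is_root rho & ureach x rho by move=> H; apply: H hn.
elim => [|m IH] //=; case e: (iter m _ _) => [y|] /=; last by move=> _; exact: IH e.
by move=> hy; exists y; [apply/eqP|exists m].
Qed.
End Forest.

Section Graft.
Variables (C : finType) (A abar : graph C) (g : comps A -> vtx abar).

Lemma graft_iter_inr k (y : option (vtx abar)) :
  iter k (@pstep C (graft g)) (omap inr y) = omap inr (iter k (@pstep C abar) y).
Proof. by elim: k => //= k ->; case: (iter k _ y). Qed.

Lemma graft_iter_inl k x y : iter k (@pstep C A) (Some x) = Some y ->
  iter k (@pstep C (graft g)) (Some (inl x)) = Some (inl y).
Proof.
elim: k y => [|k IH] y /=; first by move=> [->].
case e: (iter k _ _) => [z|] //= pz.
by rewrite (IH z) //= pz.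
Qed.

Lemma graft_par_root (cx : comps A) :
  graft_par g (inl (val cx)) = Some (inr (g cx)).
Proof.
rewrite /=; have := valP cx; rewrite /is_root => /eqP ->.
by rewrite valK.
Qed.

Lemma graft_par_inl x y : par x = Some y -> graft_par g (inl x) = Some (inl y).
Proof. by rewrite /= => ->. Qed.

Lemma graft_par_inr y : graft_par g (inr y) = omap inr (par y).
Proof. by []. Qed.

Lemma graft_no_reach_inr_inl y x : ~ ureach (G := graft g) (inr y) (inl x).
Proof.
move=> [k]; have := graft_iter_inr k (Some y) => /= ->.
by case: (iter k _ _).
Qed.

Lemma graft_root_not_cycle x : is_root x -> ~~ on_cycle (G := graft g) (inl x).
Proof.
move=> rx; apply/on_cycleP => [[k]]; rewrite iterSr.
have -> : pstep (G:=graft g) (Some (inl x)) = Some (inr (g (Sub x rx))).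
  exact: (graft_par_root (Sub x rx)).
by have := graft_iter_inr k (Some (g (Sub x rx))) => /= ->; case: (iter k _ _).
Qed.
End Graft.

Lemma card_PR (C : finType) (a : graph C) (c : {set vtx a}) :
  #|Pvtx c| + #|Rvtx c| = #|vtx a|.
Proof.
rewrite !card_sig -(cardC (inP c)); congr (_ + _).
Qed.

Section Fwd.
Variables (C : finType) (a A abar : graph C) (g : {ffun comps A -> vtx abar})
  (f : vtx A + vtx abar -> vtx a).
Hypothesis isof : @iso_map C (graft g) a f.
Hypothesis forA : [forall v : vtx A, ~~ on_cycle v].

Definition cset := [set u : vtx a | [exists x : vtx A, is_root x && (f (inl x) == u)]].

Lemma finj : injective f. Proof. exact: iso_inj isof. Qed.

Lemma in_cset x : (f (inl x) \in cset) = is_root x.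
Proof.
rewrite inE; apply/existsP/idP => [[y /andP [ry /eqP /finj [<-]]]//|rx].
by exists x; rewrite rx eqxx.
Qed.

Lemma cset_inv u : u \in cset -> exists2 x, is_root x & u = f (inl x).
Proof. by rewrite inE => /existsP [x /andP [rx /eqP <-]]; exists x. Qed.

Lemma Fpar_root (cx : comps A) : par (f (inl (val cx))) = Some (f (inr (g cx))).
Proof. by rewrite (iso_par isof) (graft_par_root g cx : @par C (graft g) (inl (val cx)) = _). Qed.

Lemma Fpar_inl x y : par x = Some y -> par (f (inl x)) = Some (f (inl y)).
Proof. by move=> e; rewrite (iso_par isof) /= e. Qed.

Lemma Fpar_inr y : par (f (inr y)) = omap (fun z => f (inr z)) (par y).
Proof. by rewrite (iso_par isof) /=; case: (par y). Qed.

Lemma F_inP x : inP cset (f (inl x)).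
Proof.
have [rho rr [k e]] := forest_root forA x.
apply/existsP; exists (f (inl rho)); rewrite in_cset rr /=.
apply/reachP; apply/(iso_ureach isof); exists k.
exact: graft_iter_inl e.
Qed.

Lemma F_notinP y : ~~ inP cset (f (inr y)).
Proof.
apply/existsP => [[u /andP [/cset_inv [x _ ->]]]].
by rewrite (iso_reach isof) => /reachP /graft_no_reach_inr_inl.
Qed.

Lemma F_adm : admissible cset.
Proof.
apply/andP; split.
  apply/forall_inP => u /cset_inv [x rx ->]; apply/andP; split.
    by rewrite /is_root (Fpar_root (Sub x rx)).
  by rewrite (iso_on_cycle isof) graft_root_not_cycle.
apply/forall_inP => u1 /cset_inv [x1 r1 ->]; apply/forall_inP => u2 /cset_inv [x2 r2 ->].
apply/implyP => _; apply/existsP => [[w /andP []]].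
rewrite (Fpar_root (Sub x1 r1)) => /eqP [<-].
by rewrite (iso_reach isof) => /reachP /graft_no_reach_inr_inl.
Qed.

Definition alpha (x : vtx A) : Pvtx cset := Sub (f (inl x)) (F_inP x).
Definition beta (y : vtx abar) : Rvtx cset := Sub (f (inr y)) (F_notinP y).

Lemma alpha_inj : injective alpha.
Proof. by move=> x y /(congr1 val) /= /finj [->]. Qed.
Lemma beta_inj : injective beta.
Proof. by move=> x y /(congr1 val) /= /finj [->]. Qed.

Lemma card_alpha : #|vtx A| = #|Pvtx cset| /\ #|vtx abar| = #|Rvtx cset|.
Proof.
have h1 := leq_card _ alpha_inj; have h2 := leq_card _ beta_inj.
have := card_PR cset; rewrite -(iso_card isof) /= card_sum.
change (#|Pvtx cset| + #|Rvtx cset| = #|vtx A| + #|vtx abar| -> #|vtx A| = #|Pvtx cset| /\ #|vtx abar| = #|Rvtx cset|).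
by move: h1 h2; clear; lia.
Qed.

Lemma alpha_iso : no_free A -> no_free a -> @iso_map C A (Pc cset) alpha.
Proof.
move=> /forallP nA /forallP na.
apply/and3P; split; first by apply/injectiveP; exact: alpha_inj.
  by rewrite (proj1 card_alpha).
apply/forallP => x; apply/and3P; split.
- rewrite /= /Ppar /= in_cset /is_root.
  case e: (par x) => [y|] /=; last by rewrite eqxx.
  by rewrite (Fpar_inl e) /= (insubT (inP cset) (F_inP y)).
- by rewrite /= (iso_dec isof).
- by rewrite /= (eqP (na _)) (eqP (nA _)).
Qed.

Lemma beta_iso : is_grafting g -> no_free a -> @iso_map C abar (Rbarc cset) beta.
Proof.
move=> /forallP gr /forallP na.
apply/and3P; split; first by apply/injectiveP; exact: beta_inj.
  by rewrite (proj2 card_alpha).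
apply/forallP => y; apply/and3P; split.
- rewrite /= /Rpar /= Fpar_inr.
  case e: (par y) => [z|] //=.
  by rewrite (insubT (fun v => ~~ inP cset v) (F_notinP z)).
- by rewrite /= (iso_dec isof).
rewrite /= (eqP (na _)) add0n -(eqP (gr y)).
have -> : [set u in cset | par u == Some (f (inr y))] =
   [set f (inl (val cx)) | cx in [set cx | g cx == y]].
  apply/setP => u; rewrite inE; apply/andP/imsetP.
    move=> [/cset_inv [x rx ->]]; rewrite (Fpar_root (Sub x rx)) => /eqP [/finj [e]].
    by exists (Sub x rx); rewrite // inE e.
  move=> [cx]; rewrite inE => /eqP <- ->; split; last by rewrite Fpar_root.
  by rewrite in_cset (valP cx).
rewrite card_in_imset //.
by move=> c1 c2 _ _ /finj [] /val_inj.
Qed.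

End Fwd.

Lemma insub_someE (T : Type) (P : pred T) (sT : subType P) (w : T) (u : sT) :
  insub w = Some u -> val u = w.
Proof. by case: insubP => // u' _ <- [<-]. Qed.

Definition gof (C : finType) (a A abar : graph C) (y0 : vtx abar)
  (f : {ffun vtx A + vtx abar -> vtx a}) : {ffun comps A -> vtx abar} :=
  [ffun cx => odflt y0 [pick y | par (f (inl (val cx))) == Some (f (inr y))]].

Section Bwd.
Variables (C : finType) (a A abar : graph C) (c : {set vtx a})
  (al : vtx A -> Pvtx c) (be : vtx abar -> Rvtx c) (y0 : vtx abar).
Hypothesis adm : admissible c.
Hypothesis Ial : @iso_map C A (Pc c) al.
Hypothesis Ibe : @iso_map C abar (Rbarc c) be.
Hypothesis noa : no_free a.

Lemma P_step v : inP c v -> v \notin c -> exists2 w, par v = Some w & inP c w.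
Proof.
move=> /existsP [u /andP [uc /reachP ru]] vc.
have [|w pw rw] := ureach_first ru; first by apply: contraNneq vc => ->.
by exists w => //; apply/existsP; exists u; rewrite uc; apply/reachP.
Qed.

Lemma R_closed v w : ~~ inP c v -> par v = Some w -> ~~ inP c w.
Proof.
move=> nv pv; apply: contra nv => /existsP [u /andP [uc /reachP ru]].
apply/existsP; exists u; rewrite uc; apply/reachP.
exact: ureach_trans (ureach_step pv) ru.
Qed.

Lemma cut_par u : u \in c -> exists2 w, par u = Some w & ~~ inP c w.
Proof.
move=> uc; case/andP: adm => /forall_inP /(_ u uc) /andP [nr nc] /forall_inP /(_ u uc) pw.
move: nr; rewrite /is_root; case e: (par u) => [w|] // _; exists w => //.
apply/negP => /existsP [u' /andP [u'c /reachP [k rk]]].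
case: (eqVneq u u') => [eu|ne].
  subst u'; move/negP: nc; apply; apply/on_cycleP; exists k.
  by rewrite iterSr /= e.
move/forall_inP: pw => /(_ u' u'c); rewrite ne /=; move/existsP; apply.
by exists w; rewrite e eqxx /=; apply/reachP; exists k.
Qed.

Lemma c_inP u : u \in c -> inP c u.
Proof. by move=> uc; apply/existsP; exists u; rewrite uc; apply/reachP/ureach_refl. Qed.

Lemma al_surj v : exists x, al x = v.
Proof. by have [g _ gK] := iso_bij Ial; exists (g v). Qed.
Lemma be_surj v : exists y, be y = v.
Proof. by have [g _ gK] := iso_bij Ibe; exists (g v). Qed.

Lemma al_root x : (par x == None) = (val (al x) \in c).
Proof.
have := iso_par Ial x; rewrite /= /Ppar.
case: ifP => vc.
  by case: (par x).
have [w pw iw] := P_step (valP (al x)) (negbT vc).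
by rewrite pw /= (insubT (inP c) iw); case: (par x).
Qed.

Lemma al_par x y : par x = Some y -> par (val (al x)) = Some (val (al y)).
Proof.
move=> e; have := iso_par Ial x; rewrite /= /Ppar e /=.
case: ifP => // _; case: (par (val (al x))) => //= w.
by move=> h; congr Some; symmetry; exact: (insub_someE h).
Qed.

Lemma be_par y : par (val (be y)) = omap (fun z => val (be z)) (par y).
Proof.
have := iso_par Ibe y; rewrite /= /Rpar.
case e: (par (val (be y))) => [w|] /=; last by case: (par y).
have nw := R_closed (valP (be y)) e.
rewrite (insubT (fun v => ~~ inP c v) nw); case: (par y) => //= z [<-] //.
Qed.

Definition glue : {ffun vtx A + vtx abar -> vtx a} :=
  [ffun z => match z with inl x => val (al x) | inr y => val (be y) end].

Lemma glue_inj : injective glue.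
Proof.
have ia := iso_inj Ial; have ib := iso_inj Ibe.
move=> [x1|y1] [x2|y2]; rewrite !ffunE.
- by move/val_inj/ia => ->.
- by move=> e; have := valP (al x1); rewrite e; move: (valP (be y2)) => /negP.
- by move=> e; have := valP (al x2); rewrite -e; move: (valP (be y1)) => /negP.
- by move/val_inj/ib => ->.
Qed.

Lemma root_exists x : par x = None ->
  exists y, par (val (al x)) = Some (val (be y)).
Proof.
move=> px; have : val (al x) \in c by rewrite -al_root px.
move/cut_par => [w pw nw]; have [y ey] := be_surj (Sub w nw).
by exists y; rewrite ey.
Qed.

Lemma gof_root (cx : comps A) :
  par (val (al (val cx))) = Some (val (be (gof y0 glue cx))).
Proof.
have px : par (val cx) = None by apply/eqP; exact: (valP cx).
have [y ey] := root_exists px.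
rewrite /gof ffunE; case: pickP => [y' |].
  by rewrite !ffunE ey => /eqP ->.
by move/(_ y); rewrite !ffunE ey eqxx.
Qed.

Lemma glue_iso : @iso_map C (graft (gof y0 glue)) a glue.
Proof.
move/forallP: noa => na.
apply/and3P; split; first by apply/injectiveP; exact: glue_inj.
  rewrite /= card_sum (iso_card Ial) (iso_card Ibe) /=.
  by rewrite card_PR.
apply/forallP => [[x|y]]; apply/and3P; split.
- rewrite ffunE; case e: (par x) => [y|].
    by rewrite (al_par e) /= e /= ffunE.
  have rx : is_root x by apply/eqP.
  rewrite (graft_par_root _ (Sub x rx) : @par C (graft _) (inl x) = _) /= ffunE.
  by rewrite (gof_root (Sub x rx)).
- by rewrite ffunE; apply/eqP; exact: (iso_dec Ial x).
- by rewrite ffunE (eqP (na _)).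
- by rewrite ffunE be_par /=; case: (par y) => //= z; rewrite ffunE.
- by rewrite ffunE; apply/eqP; exact: (iso_dec Ibe y).
- by rewrite ffunE (eqP (na _)).
Qed.

Lemma root_in_c (cx : comps A) : val (al (val cx)) \in c.
Proof. by rewrite -al_root; exact: (valP cx). Qed.

Lemma c_char u : u \in c -> exists cx : comps A, u = val (al (val cx)).
Proof.
move=> uc; have [x ex] := al_surj (Sub u (c_inP uc)).
have rx : is_root x by rewrite /is_root al_root ex.
by exists (Sub x rx); rewrite /= ex.
Qed.

Lemma gof_grafting : is_grafting (gof y0 glue).
Proof.
move/forallP: noa => na; apply/forallP => y.
have := iso_nfree Ibe y; rewrite /= (eqP (na _)) add0n => <-.
have -> : [set u in c | par u == Some (val (be y))] =
   [set val (al (val cx)) | cx in [set cx | gof y0 glue cx == y]].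
  apply/setP => u; rewrite inE; apply/andP/imsetP.
    move=> [/c_char [cx ->]]; rewrite gof_root => /eqP [/val_inj /(iso_inj Ibe) e].
    by exists cx; rewrite // inE e.
  move=> [cx]; rewrite inE => /eqP <- ->; split; first exact: root_in_c.
  by rewrite gof_root.
rewrite card_in_imset //.
by move=> c1 c2 _ _ /val_inj /(iso_inj Ial) /val_inj.
Qed.

Lemma cset_glue : cset glue = c.
Proof.
apply/setP => u; rewrite inE; apply/existsP/idP.
  move=> [x /andP [rx /eqP <-]]; rewrite ffunE.
  by rewrite -al_root.
move/c_char => [cx ->]; exists (val cx); rewrite (valP cx) ffunE eqxx //.
Qed.

End Bwd.

Section Main.
Variables (C : finType) (a A abar : graph C) (y0 : vtx abar).
Hypothesis forA : [forall v : vtx A, ~~ on_cycle v].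
Hypothesis noA : no_free A.
Hypothesis noa : no_free a.

Local Notation T1 := ({ffun comps A -> vtx abar}).
Local Notation T2 := ({ffun vtx A + vtx abar -> vtx a}).

Definition S1 : {set T1 * T2} :=
  [set p : T1 * T2 | (p.1 \in graftings a A abar) && @iso_map C (graft p.1) a p.2].

Lemma S1_cuts p : p \in S1 -> cset p.2 \in cuts a A abar.
Proof.
rewrite inE => /andP [G I]; move: G; rewrite inE => /andP [gr _].
rewrite inE (F_adm I) /=; apply/andP; split.
  by apply: iso_sym; apply/isoP; exists (alpha I forA); apply: alpha_iso.
by apply: iso_sym; apply/isoP; exists (beta I); apply: beta_iso.
Qed.

Lemma fiber (c : {set vtx a}) : c \in cuts a A abar ->
  #|[set p in S1 | cset p.2 == c]| = sigma A * sigma abar.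
Proof.
rewrite inE => /and3P [adm iP iR].
pose IA := [set al : {ffun vtx A -> Pvtx c} | @iso_map C A (Pc c) al].
pose IB := [set be : {ffun vtx abar -> Rvtx c} | @iso_map C abar (Rbarc c) be].
have cA : #|IA| = sigma A.
  have /isoP [h Ih] := iso_sym iP; exact: card_iso_l Ih.
have cB : #|IB| = sigma abar.
  have /isoP [h Ih] := iso_sym iR; exact: card_iso_l Ih.
rewrite -cA -cB -cardsX.
pose Psi (q : {ffun vtx A -> Pvtx c} * {ffun vtx abar -> Rvtx c}) : T1 * T2 :=
  (gof y0 (glue q.1 q.2), glue q.1 q.2).
have -> : [set p in S1 | cset p.2 == c] = Psi @: setX IA IB.
  apply/setP => p; rewrite inE; apply/andP/imsetP.
    case: p => g f [] pS /eqP /= ec; move: pS; rewrite inE /= => /andP [G I].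
    move: G; rewrite inE => /andP [gr _].
    subst c.
    exists ([ffun x => alpha I forA x], [ffun y => beta I y]).
      rewrite inE !inE /=.
      rewrite (iso_map_ext (G:=A) (H:=Pc (cset f)) (f2 := alpha I forA)); last by move=> x; rewrite ffunE.
      rewrite (iso_map_ext (G:=abar) (H:=Rbarc (cset f)) (f2 := beta I)); last by move=> x; rewrite ffunE.
      by rewrite alpha_iso // beta_iso.
    have eg : glue [ffun x => alpha I forA x] [ffun y => beta I y] = f.
      by apply/ffunP => [[x|y]]; rewrite !ffunE.
    rewrite /Psi /= eg; congr (_, _).
    apply/ffunP => cx; rewrite ffunE; case: pickP => [y /eqP|].
      by rewrite (Fpar_root I) => [[/(finj I) [->]]].
    by move/(_ (g cx)); rewrite (Fpar_root I) eqxx.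
  move=> [[al be]]; rewrite inE /= !inE => /andP [Ia Ib] ->.
  rewrite /Psi /= cset_glue // ?eqxx ?andbT //.
  have gI := @glue_iso C a A abar c al be y0 adm Ia Ib noa.
  have gG := @gof_grafting C a A abar c al be y0 adm Ia Ib noa.
  split=> //; rewrite gG gI /= andbT; apply/existsP; exists (glue al be); exact: gI.
rewrite card_in_imset // => [[al1 be1] [al2 be2]] _ _ [_ e].
have ea : al1 = al2.
  apply/ffunP => x; apply: val_inj.
  by move/ffunP: e => /(_ (inl x)); rewrite !ffunE.
have eb : be1 = be2.
  apply/ffunP => x; apply: val_inj.
  by move/ffunP: e => /(_ (inr x)); rewrite !ffunE.
by rewrite ea eb.
Qed.

Lemma count_eq : #|graftings a A abar| * sigma a = #|cuts a A abar| * (sigma A * sigma abar).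
Proof.
have E1 : #|S1| = #|graftings a A abar| * sigma a.
  rewrite -sum1_card.
  rewrite (eq_bigl (fun p : T1 * T2 => (p.1 \in graftings a A abar) &&
       @iso_map C (graft p.1) a p.2)); last by move=> p; rewrite inE.
  rewrite -(pair_big_dep (fun g => g \in graftings a A abar)
       (fun g (f : T2) => @iso_map C (graft g) a f) (fun _ _ => 1)) /=.
  rewrite -sum_nat_const; apply: eq_bigr => g.
  rewrite inE => /andP [_ /isoP [h Ih]].
  by rewrite sum1dep_card (card_iso_r Ih).
have E2 : #|S1| = #|cuts a A abar| * (sigma A * sigma abar).
  rewrite -sum1_card (partition_big (fun p : T1 * T2 => cset p.2) predT) //=.
  rewrite -sum_nat_const [RHS]big_mkcond /=; apply: eq_bigr => c _.
  case: ifP => cc; first by rewrite -(fiber cc) -sum1_card; apply: eq_bigl => p; rewrite inE.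
  apply: big_pred0 => p; apply/negP => /andP [pS /eqP ep].
  by move: (S1_cuts pS); rewrite ep cc.
by rewrite -E1 -E2.
Qed.
End Main.

Unset Implicit Arguments.
Import GRing.Theory Num.Theory.
Local Open Scope ring_scope.

Theorem proposition4p12 (C : finType) (r : nat) (a A abar : graph C) :
  (1 <= r)%N ->
  is_forest r A -> no_free A ->
  total_free abar = r ->
  no_free a ->
  (is_aroma a && is_aroma abar) || (is_aromatic_tree a && is_aromatic_tree abar) ->
  (#|cuts a A abar|%:R : rat)
    = (sigma a)%:R / ((sigma A)%:R * (sigma abar)%:R) * (#|graftings a A abar|)%:R.
Proof.
move=> r1 /andP [forA _] noA tf noa _.
have : (0 < #|vtx abar|)%N.
  rewrite lt0n; apply/negP => /eqP /card0_eq h.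
  have : total_free abar = 0%N.
    by apply: big1 => v _; move: (h v); rewrite !inE.
  by rewrite tf => e; move: r1; rewrite e.
case/card_gt0P => y0 _.
have ce := count_eq y0 forA noA noa.
have nz : ((sigma A)%:R * (sigma abar)%:R : rat) != 0.
  by rewrite mulf_neq0 // pnatr_eq0 -lt0n sigma_gt0.
have -> : (#|cuts a A abar|%:R : rat) =
    (#|graftings a A abar| * sigma a)%:R / ((sigma A)%:R * (sigma abar)%:R).
  by rewrite ce !natrM mulfK.
by rewrite natrM -mulrA mulrC.
Qed.
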